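(* Let $N(T)$ be a $C^0$ net on a grid $T$ with lines $s_i$, $t_j$, having the BMSDD property with constant $L$, and let $(\boldsymbol{\alpha}^{[s]},\boldsymbol{\beta}^{[s]}),(\boldsymbol{\alpha}^{[t]},\boldsymbol{\beta}^{[t]})\in\mathscr{W}$. Let $\tilde T$ be the grid with lines $\tilde s_{2i}=(1-\alpha^{[s]}_i)s_i+\alpha^{[s]}_is_{i+1}$, $\tilde s_{2i+1}=(1-\beta^{[s]}_i)s_i+\beta^{[s]}_is_{i+1}$, $\tilde t_{2j}=(1-\alpha^{[t]}_j)t_j+\alpha^{[t]}_jt_{j+1}$, $\tilde t_{2j+1}=(1-\beta^{[t]}_j)t_j+\beta^{[t]}_jt_{j+1}$ ($i,j\in\mathbb{Z}$). Then the net $\mathcal{C}(N)|_{\tilde T}$ has the BMSDD property with constant $3L$.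
   Context: $\mathscr{W}$ is the set of pairs $(\boldsymbol{\alpha},\boldsymbol{\beta})$ of real bi-infinite sequences with $\inf_i\min\{\alpha_i,1-\beta_i,\beta_i-\alpha_i\}>0$. For strictly increasing bi-infinite real sequences $(s_i)$, $(t_j)$, unbounded above and below, the grid is $T=\bigcup_i\{s_i\}\times\mathbb{R}\cup\bigcup_j\mathbb{R}\times\{t_j\}$. A net $N(T)$ is a function on $T$ with values in $\mathbb{R}^m$; it is $C^0$ if all u-functions $s\mapsto N(s,t_j)$, $t\mapsto N(s_i,t)$ are continuous. The piecewise Coons patch is defined on each rectangle $[s_i,s_{i+1}]\times[t_j,t_{j+1}]$, with $h_1=s_{i+1}-s_i$, $h_2=t_{j+1}-t_j$, by $\mathcal{C}(N)(s,t)=\frac{s_{i+1}-s}{h_1}N(s_i,t)+\frac{s-s_i}{h_1}N(s_{i+1},t)+\frac{t_{j+1}-t}{h_2}N(s,t_j)+\frac{t-t_j}{h_2}N(s,t_{j+1})-B(s,t)$, with $B(s,t)=\frac{s_{i+1}-s}{h_1}\big(\frac{t_{j+1}-t}{h_2}N(s_i,t_j)+\frac{t-t_j}{h_2}N(s_i,t_{j+1})\big)+\frac{s-s_i}{h_1}\big(\frac{t_{j+1}-t}{h_2}N(s_{i+1},t_j)+\frac{t-t_j}{h_2}N(s_{i+1},t_{j+1})\big)$. For $\sigma_1\ne\sigma_2$, $\tau_1\ne\tau_2$, $[\sigma_1,\sigma_2;\tau_1,\tau_2]N=\frac{N(\sigma_1,\tau_1)+N(\sigma_2,\tau_2)-N(\sigma_2,\tau_1)-N(\sigma_1,\tau_2)}{(\sigma_1-\sigma_2)(\tau_1-\tau_2)}$;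 a net on a grid has the BMSDD property with constant $L$ if $\|[\sigma_1,\sigma_2;\tau_1,\tau_2]N\|_\infty\le L$ whenever $\sigma_1\ne\sigma_2$, $\tau_1\ne\tau_2$ and all four points $(\sigma_i,\tau_j)$ lie on the grid. *)

(* Defs.v *)
From Stdlib Require Import Reals ZArith ClassicalEpsilon.
Open Scope R_scope.

Definition grid_seq (s : Z -> R) : Prop :=
  (forall i, s i < s (i + 1)%Z) /\
  (forall M, exists i, M < s i) /\ (forall M, exists i, s i < M).

Definition on_grid (s t : Z -> R) (x y : R) : Prop :=
  (exists i, x = s i) \/ (exists j, y = t j).

(* Nets with values in R^m are modelled as N : R -> R -> nat -> R, coordinate k
   meaningful for k < m; only values on the grid are ever used. *)

Definition C0_net (m : nat) (s t : Z -> R) (N : R -> R -> nat -> R) : Prop :=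
  forall k, (k < m)%nat ->
    (forall j, continuity (fun x => N x (t j) k)) /\
    (forall i, continuity (fun y => N (s i) y k)).

Definition ddiff (N : R -> R -> nat -> R) (s1 s2 t1 t2 : R) (k : nat) : R :=
  (N s1 t1 k + N s2 t2 k - N s2 t1 k - N s1 t2 k) / ((s1 - s2) * (t1 - t2)).

(* BMSDD property with constant L on the grid (s,t); the sup-norm bound is
   written coordinatewise. *)
Definition BMSDD (m : nat) (s t : Z -> R) (N : R -> R -> nat -> R) (L : R) : Prop :=
  forall s1 s2 t1 t2, s1 <> s2 -> t1 <> t2 ->
    on_grid s t s1 t1 -> on_grid s t s1 t2 ->
    on_grid s t s2 t1 -> on_grid s t s2 t2 ->
    forall k, (k < m)%nat -> Rabs (ddiff N s1 s2 t1 t2 k) <= L.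

Definition in_W (alpha beta : Z -> R) : Prop :=
  exists d, 0 < d /\
    forall i, d <= alpha i /\ d <= 1 - beta i /\ d <= beta i - alpha i.

Definition refine (s alpha beta : Z -> R) (n : Z) : R :=
  let i := (n / 2)%Z in
  if Z.even n then (1 - alpha i) * s i + alpha i * s (i + 1)%Z
  else (1 - beta i) * s i + beta i * s (i + 1)%Z.

(* An index i with s_i <= x <= s_{i+1} (chosen by epsilon; exists for grid seqs;
   on common edges the Coons formula from both cells agrees). *)
Definition cell (s : Z -> R) (x : R) : Z :=
  epsilon (inhabits 0%Z) (fun i => s i <= x <= s (i + 1)%Z).

Definition coons (s t : Z -> R) (N : R -> R -> nat -> R) : R -> R -> nat -> R :=
  fun x y k =>
    let i := cell s x in let j := cell t y in
    let s0 := s i in let s1 := s (i + 1)%Z in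
    let t0 := t j in let t1 := t (j + 1)%Z in
    let h1 := s1 - s0 in let h2 := t1 - t0 in
    let B := (s1 - x) / h1 * ((t1 - y) / h2 * N s0 t0 k + (y - t0) / h2 * N s0 t1 k)
           + (x - s0) / h1 * ((t1 - y) / h2 * N s1 t0 k + (y - t0) / h2 * N s1 t1 k) in
    (s1 - x) / h1 * N s0 y k + (x - s0) / h1 * N s1 y k
    + (t1 - y) / h2 * N x t0 k + (y - t0) / h2 * N x t1 k - B.

(* Main.v *)
Require Import Defs.
From Stdlib Require Import Reals ZArith Lra Lia ClassicalEpsilon.
Open Scope R_scope.


Lemma mono_nat (s : Z -> R) : (forall i, s i < s (i + 1)%Z) ->
  forall i (n : nat), s i <= s (i + Z.of_nat n)%Z.
Proof.
  intros H i n; induction n.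
  - rewrite Z.add_0_r; lra.
  - rewrite Nat2Z.inj_succ.
    replace (i + Z.succ (Z.of_nat n))%Z with ((i + Z.of_nat n) + 1)%Z by lia.
    specialize (H (i + Z.of_nat n)%Z); lra.
Qed.

Lemma mono (s : Z -> R) : (forall i, s i < s (i + 1)%Z) ->
  forall i j, (i <= j)%Z -> s i <= s j.
Proof.
  intros H i j Hij.
  replace j with (i + Z.of_nat (Z.to_nat (j - i)))%Z by lia.
  apply mono_nat; auto.
Qed.

Lemma cell_ex (s : Z -> R) : grid_seq s -> forall x, exists i, s i <= x <= s (i + 1)%Z.
Proof.
  intros [Hinc [Hup Hdown]] x.
  destruct (Hup x) as [b Hb]. destruct (Hdown x) as [a Ha].
  assert (P : forall n : nat, forall a, s a <= x -> x < s (a + Z.of_nat n)%Z ->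
     exists i, s i <= x <= s (i + 1)%Z).
  { induction n; intros a0 H1 H2.
    - rewrite Z.add_0_r in H2; lra.
    - destruct (Rle_dec x (s (a0 + 1)%Z)).
      + exists a0; lra.
      + apply (IHn (a0 + 1)%Z); [lra|].
        replace (a0 + 1 + Z.of_nat n)%Z with (a0 + Z.of_nat (S n))%Z by lia; auto. }
  destruct (Z.le_gt_cases a b).
  - apply (P (Z.to_nat (b - a)) a); [lra|].
    replace (a + Z.of_nat (Z.to_nat (b - a)))%Z with b by lia; auto.
  - assert (s b <= s a) by (apply mono; auto; lia). lra.
Qed.

Lemma cell_spec (s : Z -> R) : grid_seq s -> forall x,
  s (cell s x) <= x <= s (cell s x + 1)%Z.
Proof.
  intros G x. unfold cell. apply epsilon_spec. apply cell_ex; auto.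
Qed.

Definition Phi (s t : Z -> R) (N : R -> R -> nat -> R) (i j : Z) (x y : R) (k : nat) : R :=
    let s0 := s i in let s1 := s (i + 1)%Z in
    let t0 := t j in let t1 := t (j + 1)%Z in
    let h1 := s1 - s0 in let h2 := t1 - t0 in
    let B := (s1 - x) / h1 * ((t1 - y) / h2 * N s0 t0 k + (y - t0) / h2 * N s0 t1 k)
           + (x - s0) / h1 * ((t1 - y) / h2 * N s1 t0 k + (y - t0) / h2 * N s1 t1 k) in
    (s1 - x) / h1 * N s0 y k + (x - s0) / h1 * N s1 y k
    + (t1 - y) / h2 * N x t0 k + (y - t0) / h2 * N x t1 k - B.

Lemma coons_Phi s t N x y k : coons s t N x y k = Phi s t N (cell s x) (cell t y) x y k.
Proof. reflexivity. Qed.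

Lemma Phi_edge_x s t N i j x y k : s i < s (i+1)%Z -> t j < t (j+1)%Z ->
  (x = s i \/ x = s (i+1)%Z) -> Phi s t N i j x y k = N x y k.
Proof.
  intros H1 H2 [-> | ->]; unfold Phi; cbv zeta; field; lra.
Qed.

Lemma Phi_edge_y s t N i j x y k : s i < s (i+1)%Z -> t j < t (j+1)%Z ->
  (y = t j \/ y = t (j+1)%Z) -> Phi s t N i j x y k = N x y k.
Proof.
  intros H1 H2 [-> | ->]; unfold Phi; cbv zeta; field; lra.
Qed.

Lemma Phi_indep_x s t N i i' j x y k : (forall i, s i < s (i + 1)%Z) ->
  t j < t (j+1)%Z ->
  s i <= x <= s (i+1)%Z -> s i' <= x <= s (i'+1)%Z ->
  Phi s t N i j x y k = Phi s t N i' j x y k.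
Proof.
  intros Hs Ht Hx Hx'.
  destruct (Z.lt_total i i') as [Hl | [-> | Hl]]; auto.
  - assert (s (i+1)%Z <= s i') by (apply mono; auto; lia).
    rewrite !Phi_edge_x; auto; lra.
  - assert (s (i'+1)%Z <= s i) by (apply mono; auto; lia).
    rewrite !Phi_edge_x; auto; lra.
Qed.

Lemma Phi_indep_y s t N i j j' x y k : (forall j, t j < t (j + 1)%Z) ->
  s i < s (i+1)%Z ->
  t j <= y <= t (j+1)%Z -> t j' <= y <= t (j'+1)%Z ->
  Phi s t N i j x y k = Phi s t N i j' x y k.
Proof.
  intros Ht Hs Hy Hy'.
  destruct (Z.lt_total j j') as [Hl | [-> | Hl]]; auto.
  - assert (t (j+1)%Z <= t j') by (apply mono; auto; lia).
    rewrite !Phi_edge_y; auto; lra.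
  - assert (t (j'+1)%Z <= t j) by (apply mono; auto; lia).
    rewrite !Phi_edge_y; auto; lra.
Qed.

Lemma coons_cell s t N i j x y k : grid_seq s -> grid_seq t ->
  s i <= x <= s (i+1)%Z -> t j <= y <= t (j+1)%Z ->
  coons s t N x y k = Phi s t N i j x y k.
Proof.
  intros Gs Gt Hx Hy. rewrite coons_Phi.
  pose proof (cell_spec s Gs x). pose proof (cell_spec t Gt y).
  destruct Gs as [Hs _]; destruct Gt as [Ht _].
  rewrite (Phi_indep_x s t N (cell s x) i (cell t y) x y k); auto.
  apply Phi_indep_y; auto.
Qed.

Definition D (F : R -> R -> nat -> R) x1 x2 y1 y2 k :=
  F x1 y1 k + F x2 y2 k - F x2 y1 k - F x1 y2 k.

Lemma bmsdd_use E P L : 0 < P -> Rabs (E / P) <= L -> Rabs E <= L * P.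
Proof.
  intros HP H. unfold Rdiv in H. rewrite Rabs_mult, Rabs_inv, (Rabs_pos_eq P) in H by lra.
  replace (Rabs E) with (Rabs E * / P * P) by (field; lra).
  apply Rmult_le_compat_r; lra.
Qed.

Lemma extend (s : Z -> R) (g : R -> R -> R) (c : R) :
  grid_seq s -> (forall a b d, g a b + g b d = g a d) ->
  (forall i a b, s i <= a -> a <= b -> b <= s (i+1)%Z -> Rabs (g a b) <= c * (b - a)) ->
  forall a b, a <= b -> Rabs (g a b) <= c * (b - a).
Proof.
  intros [Hs [Hup Hdown]] Hadd Hc.
  assert (P : forall n : nat, forall i a b, s i <= a -> a <= b ->
            b <= s (i + Z.of_nat n + 1)%Z -> Rabs (g a b) <= c * (b - a)).
  { induction n; intros i a b H1 H2 H3.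
    - rewrite Z.add_0_r in H3; apply Hc with i; auto.
    - destruct (Rle_dec b (s (i + 1)%Z)).
      + apply Hc with i; auto.
      + destruct (Rle_dec a (s (i + 1)%Z)) as [Ha|Ha].
        2:{ apply IHn with (i+1)%Z; try lra.
          replace (i + 1 + Z.of_nat n + 1)%Z with (i + Z.of_nat (S n) + 1)%Z by lia; auto. }
        rewrite <- (Hadd a (s (i+1)%Z) b).
        eapply Rle_trans; [apply Rabs_triang|].
        assert (Rabs (g a (s (i + 1)%Z)) <= c * (s (i+1)%Z - a)).
        { apply Hc with i; auto; lra. }
        assert (Rabs (g (s (i + 1)%Z) b) <= c * (b - s (i+1)%Z)).
        { apply IHn with (i+1)%Z; try lra.
          replace (i + 1 + Z.of_nat n + 1)%Z with (i + Z.of_nat (S n) + 1)%Z by lia; auto. }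
        lra. }
  intros a b Hab.
  destruct (Hdown a) as [i Hi]. destruct (Hup b) as [j Hj].
  destruct (Z.le_gt_cases j i).
  - assert (s j <= s i) by (apply mono; auto). lra.
  - apply (P (Z.to_nat (j - i - 1)) i); try lra.
    replace (i + Z.of_nat (Z.to_nat (j - i - 1)) + 1)%Z with j by lia; lra.
Qed.


Lemma D_Phi s t N i j x1 x2 y1 y2 k : s i < s (i+1)%Z -> t j < t (j+1)%Z ->
  let s0 := s i in let s1 := s (i+1)%Z in let t0 := t j in let t1 := t (j+1)%Z in
  D (Phi s t N i j) x1 x2 y1 y2 k =
  (x2 - x1) / (s1 - s0) * (N s0 y1 k + N s1 y2 k - N s1 y1 k - N s0 y2 k)
  + (y2 - y1) / (t1 - t0) * (N x1 t0 k + N x2 t1 k - N x2 t0 k - N x1 t1 k)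
  - (x2 - x1) * (y2 - y1) / ((s1 - s0) * (t1 - t0)) * (N s0 t0 k + N s1 t1 k - N s1 t0 k - N s0 t1 k).
Proof. intros. unfold D, Phi, s0, s1, t0, t1. cbv zeta. field. lra. Qed.

Lemma term_bound a E L P : 0 <= a -> Rabs E <= L * P -> Rabs (a * E) <= a * (L * P).
Proof.
  intros Ha HE. rewrite Rabs_mult, (Rabs_pos_eq a) by lra.
  apply Rmult_le_compat_l; lra.
Qed.

Lemma cell_bound m s t N L i j x1 x2 y1 y2 k : grid_seq s -> grid_seq t ->
  BMSDD m s t N L -> (k < m)%nat ->
  s i <= x1 -> x1 <= x2 -> x2 <= s (i+1)%Z ->
  t j <= y1 -> y1 <= y2 -> y2 <= t (j+1)%Z ->
  Rabs (D (coons s t N) x1 x2 y1 y2 k) <= 3 * L * ((x2 - x1) * (y2 - y1)).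
Proof.
  intros Gs Gt HB Hk H1 H2 H3 H4 H5 H6.
  assert (Hs : s i < s (i+1)%Z) by (apply (proj1 Gs)).
  assert (Ht : t j < t (j+1)%Z) by (apply (proj1 Gt)).
  unfold D.
  rewrite (coons_cell s t N i j x1 y1), (coons_cell s t N i j x2 y2),
    (coons_cell s t N i j x2 y1), (coons_cell s t N i j x1 y2) by (auto; lra).
  fold (D (Phi s t N i j) x1 x2 y1 y2 k).
  destruct (Req_dec x1 x2) as [<- | Hx].
  { unfold D. replace (Phi s t N i j x1 y1 k + Phi s t N i j x1 y2 k - Phi s t N i j x1 y1 k -
      Phi s t N i j x1 y2 k) with 0 by ring. rewrite Rabs_R0.
    replace (3 * L * ((x1 - x1) * (y2 - y1))) with 0 by ring; lra. }
  destruct (Req_dec y1 y2) as [<- | Hy].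
  { unfold D. replace (Phi s t N i j x1 y1 k + Phi s t N i j x2 y1 k - Phi s t N i j x2 y1 k -
      Phi s t N i j x1 y1 k) with 0 by ring. rewrite Rabs_R0.
    replace (3 * L * ((x2 - x1) * (y1 - y1))) with 0 by ring; lra. }
  rewrite D_Phi by auto. cbv zeta.
  set (s0 := s i) in *. set (s1 := s (i+1)%Z) in *.
  set (t0 := t j) in *. set (t1 := t (j+1)%Z) in *.
  assert (E1 : Rabs (N s0 y1 k + N s1 y2 k - N s1 y1 k - N s0 y2 k) <= L * ((s0 - s1) * (y1 - y2))).
  { apply bmsdd_use; [nra|]. apply HB; auto; try lra;
      unfold on_grid; left; first [exists i; reflexivity | exists (i+1)%Z; reflexivity]. }
  assert (E2 : Rabs (N x1 t0 k + N x2 t1 k - N x2 t0 k - N x1 t1 k) <= L * ((x1 - x2) * (t0 - t1))).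
  { apply bmsdd_use; [nra|]. apply HB; auto; try lra;
      unfold on_grid; right; first [exists j; reflexivity | exists (j+1)%Z; reflexivity]. }
  assert (E3 : Rabs (N s0 t0 k + N s1 t1 k - N s1 t0 k - N s0 t1 k) <= L * ((s0 - s1) * (t0 - t1))).
  { apply bmsdd_use; [nra|]. apply HB; auto; try lra;
      unfold on_grid; left; first [exists i; reflexivity | exists (i+1)%Z; reflexivity]. }
  assert (L0 : 0 <= L).
  { assert (0 <= L * ((s0 - s1) * (t0 - t1))) by (eapply Rle_trans; [apply Rabs_pos|exact E3]).
    assert (0 < (s0 - s1) * (t0 - t1)) by nra. nra. }
  eapply Rle_trans. { unfold Rminus at 1. apply Rabs_triang. }
  rewrite Rabs_Ropp.
  eapply Rle_trans. { apply Rplus_le_compat_r. apply Rabs_triang. }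
  apply Rle_trans with ((x2 - x1) / (s1 - s0) * (L * ((s0 - s1) * (y1 - y2)))
     + (y2 - y1) / (t1 - t0) * (L * ((x1 - x2) * (t0 - t1)))
     + (x2 - x1) * (y2 - y1) / ((s1 - s0) * (t1 - t0)) * (L * ((s0 - s1) * (t0 - t1)))).
  - repeat apply Rplus_le_compat; apply term_bound; auto.
    + apply Rmult_le_pos; [lra|]. left; apply Rinv_0_lt_compat; lra.
    + apply Rmult_le_pos; [lra|]. left; apply Rinv_0_lt_compat; lra.
    + apply Rmult_le_pos; [nra|]. left; apply Rinv_0_lt_compat; nra.
  - right. field. lra.
Qed.

Lemma all_bound_ord m s t N L x1 x2 y1 y2 k : grid_seq s -> grid_seq t ->
  BMSDD m s t N L -> (k < m)%nat -> x1 <= x2 -> y1 <= y2 ->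
  Rabs (D (coons s t N) x1 x2 y1 y2 k) <= 3 * L * ((x2 - x1) * (y2 - y1)).
Proof.
  intros Gs Gt HB Hk Hx Hy.
  replace (3 * L * ((x2 - x1) * (y2 - y1))) with ((3 * L * (x2 - x1)) * (y2 - y1)) by ring.
  apply (extend t (fun a b => D (coons s t N) x1 x2 a b k)); auto.
  { intros. unfold D; ring. }
  intros j a b Ha Hab Hb.
  replace (3 * L * (x2 - x1) * (b - a)) with ((3 * L * (b - a)) * (x2 - x1)) by ring.
  apply (extend s (fun c d => D (coons s t N) c d a b k)); auto.
  { intros. unfold D; ring. }
  intros i c d Hc Hcd Hd.
  replace (3 * L * (b - a) * (d - c)) with (3 * L * ((d - c) * (b - a))) by ring.
  eapply cell_bound; eauto.
Qed.

Lemma all_bound m s t N L x1 x2 y1 y2 k : grid_seq s -> grid_seq t ->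
  BMSDD m s t N L -> (k < m)%nat ->
  Rabs (D (coons s t N) x1 x2 y1 y2 k) <= 3 * L * (Rabs (x1 - x2) * Rabs (y1 - y2)).
Proof.
  intros Gs Gt HB Hk.
  assert (Hsw1 : forall a b c d, D (coons s t N) a b c d k = - D (coons s t N) b a c d k)
    by (intros; unfold D; ring).
  assert (Hsw2 : forall a b c d, D (coons s t N) a b c d k = - D (coons s t N) a b d c k)
    by (intros; unfold D; ring).
  destruct (Rle_dec x1 x2); destruct (Rle_dec y1 y2).
  - rewrite (Rabs_left1 (x1 - x2)), (Rabs_left1 (y1 - y2)) by lra.
    replace (- (x1 - x2) * - (y1 - y2)) with ((x2 - x1) * (y2 - y1)) by ring.
    eapply all_bound_ord; eauto.
  - rewrite Hsw2, Rabs_Ropp.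
    rewrite (Rabs_left1 (x1 - x2)), (Rabs_pos_eq (y1 - y2)) by lra.
    replace (- (x1 - x2) * (y1 - y2)) with ((x2 - x1) * (y1 - y2)) by ring.
    eapply all_bound_ord; eauto; lra.
  - rewrite Hsw1, Rabs_Ropp.
    rewrite (Rabs_pos_eq (x1 - x2)), (Rabs_left1 (y1 - y2)) by lra.
    replace ((x1 - x2) * - (y1 - y2)) with ((x1 - x2) * (y2 - y1)) by ring.
    eapply all_bound_ord; eauto; lra.
  - rewrite Hsw1, Hsw2, Ropp_involutive.
    rewrite (Rabs_pos_eq (x1 - x2)), (Rabs_pos_eq (y1 - y2)) by lra.
    eapply all_bound_ord; eauto; lra.
Qed.

Theorem corollary2 (m : nat) (s t : Z -> R) (N : R -> R -> nat -> R) (L : R)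
  (alphas betas alphat betat : Z -> R) :
  grid_seq s -> grid_seq t ->
  C0_net m s t N ->
  BMSDD m s t N L ->
  in_W alphas betas -> in_W alphat betat ->
  BMSDD m (refine s alphas betas) (refine t alphat betat) (coons s t N) (3 * L).
Proof.
  intros Gs Gt _ HB _ _ s1 s2 t1 t2 Hs Ht _ _ _ _ k Hk.
  unfold ddiff. fold (D (coons s t N) s1 s2 t1 t2 k).
  pose proof (all_bound m s t N L s1 s2 t1 t2 k Gs Gt HB Hk) as H.
  assert (P1 : 0 < Rabs (s1 - s2)) by (apply Rabs_pos_lt; lra).
  assert (P2 : 0 < Rabs (t1 - t2)) by (apply Rabs_pos_lt; lra).
  unfold Rdiv. rewrite Rabs_mult, Rabs_inv, Rabs_mult.
  replace (3 * L) with (3 * L * (Rabs (s1 - s2) * Rabs (t1 - t2)) * / (Rabs (s1 - s2) * Rabs (t1 - t2)))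
    by (field; lra).
  apply Rmult_le_compat_r; auto.
  left; apply Rinv_0_lt_compat; nra.
Qed.
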